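(* Let $T\ge 2$, let $\mathcal D_1,\dots,\mathcal D_T$ be task distributions, let $f_1,\dots,f_T$ be arbitrary encoders, let $\lambda>0$, and for each $t\in\{2,\dots,T\}$ let $k_{t1},\dots,k_{t,t-1}>0$ with $\sum_{j=1}^{t-1}k_{tj}=1$. Set $\alpha=\frac{2e^2}{1+e^2}$, $\gamma_t(\lambda)=\min\big(\{\tfrac1t\}\cup\{\lambda k_{tj}\}_{j=1}^{t-1}\big)$ and $\gamma'_t(\lambda)=\max\big(\{1\}\cup\{\lambda k_{tj}\}_{j=1}^{t-1}\big)$. Then $$L_{\mathrm{test}}(f_T;\mathcal D_1,\dots,\mathcal D_T)\le \alpha^{T-1}L_{\mathrm{train}}(f_1;\mathcal D_1)+\sum_{t=2}^T\frac{\alpha^{T-t}}{\gamma_t(\lambda)}L_{\mathrm{train}}(f_t;f_{t-1},\mathcal D_t,\mathcal D_{1:t-1})+\eta,$$ $$L_{\mathrm{test}}(f_T;\mathcal D_1,\dots,\mathcal D_T)\ge \alpha^{T-1}L_{\mathrm{train}}(f_1;\mathcal D_1)+\sum_{t=2}^T\frac{\alpha^{T-t}}{\gamma'_t(\lambda)}L_{\mathrm{train}}(f_t;f_{t-1},\mathcal D_t,\mathcal D_{1:t-1})+\eta',$$ where $$\eta=\Big(2-\alpha+\alpha\log\tfrac{\alpha}{2}\Big)\frac{T-1-T\alpha+\alpha^T}{(1-\alpha)^2}+\sum_{t=2}^T\alpha^{T-t}\Big(1-\frac{1}{\gamma_t(\lambda)}\Big)\inf_f L_{\mathrm{con}}(f;\mathcal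 D_t),$$ $$\eta'=-\big(\alpha\log(1+e^2)+\alpha\big)\frac{T-1-T\alpha+\alpha^T}{(1-\alpha)^2},$$ the infimum being over all encoders $f$.
   Context: Let $\mathcal X$ be a measurable input space and $d\ge 1$. An encoder is a measurable map $f:\mathcal X\to\mathbb R^d$ with $\|f(x)\|_2=1$ for all $x$. A task distribution $\mathcal D$ consists of a probability distribution $\mu$ on a countable set of classes together with, for each class $c$, a probability distribution $\mathcal D_c$ on $\mathcal X$. Sampling scheme: $c^+\sim\mu$ and $c^-\sim\mu$ independently; given $c^+$, $x,x^+$ are drawn i.i.d. from $\mathcal D_{c^+}$; given $c^-$, $x^-\sim\mathcal D_{c^-}$ independently. Let $\ell(v)=\log(1+e^{-v})$. The contrastive loss is $L_{\mathrm{con}}(f;\mathcal D)=\mathbb E\big[\ell\big(f(x)^\top(f(x^+)-f(x^-))\big)\big]$. For an encoder $f$ let $\mathbf p(f;x,x^+,x^-)=\mathrm{softmax}\big(f(x)^\top f(x^+),\,f(x)^\top f(x^-)\big)\in\mathbb R^2$. For encoders $g,h$ the distillation loss is $L_{\mathrm{dis}}(g;h,\mathcal D)=\mathbb E\big[-\mathbf p(h;x,x^+,x^-)\cdot\log\mathbf p(g;x,x^+,x^-)\big]$ (logarithm taken componentwise), with the same sampling scheme. For $t\ge2$, the distillation loss on previously seen tasks is $L_{\mathrm{dis}}(f_t;f_{t-1},\mathcal D_{1:t-1}):=\sum_{j=1}^{t-1}k_{tj}\,L_{\mathrm{dis}}(f_t;f_{t-1},\mathcal D_j)$. Training losses: $L_{\mathrm{train}}(f_1;\mathcal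 D_1)=L_{\mathrm{con}}(f_1;\mathcal D_1)$ and, for $t\ge 2$, $L_{\mathrm{train}}(f_t;f_{t-1},\mathcal D_t,\mathcal D_{1:t-1})=L_{\mathrm{con}}(f_t;\mathcal D_t)+\lambda\,L_{\mathrm{dis}}(f_t;f_{t-1},\mathcal D_{1:t-1})$. Test loss: $L_{\mathrm{test}}(f_T;\mathcal D_1,\dots,\mathcal D_T)=\sum_{t=1}^T L_{\mathrm{con}}(f_T;\mathcal D_t)$. *)

(* Defs.v *)
From HB Require Import structures.
From mathcomp Require Import all_boot all_order all_algebra.
From mathcomp Require Import all_classical all_reals all_analysis.
Set Implicit Arguments. Unset Strict Implicit. Unset Printing Implicit Defensive.
Import Order.TTheory GRing.Theory Num.Theory.
Import numFieldNormedType.Exports.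
Local Open Scope classical_set_scope.
Local Open Scope ring_scope.

Section Defs.
Context (d : measure_display) (X : measurableType d) (R : realType) (dim : nat).

Definition dotp (u v : 'rV[R]_dim) : R := \sum_(i < dim) u ord0 i * v ord0 i.

Definition is_encoder (f : X -> 'rV[R]_dim) : Prop :=
  (forall i : 'I_dim, measurable_fun setT (fun x => f x ord0 i)) /\
  (forall x, Num.sqrt (dotp (f x) (f x)) = 1).

Record taskdist := TaskDist {
  cls_mu : nat -> R;
  cls_mu_ge0 : forall c, 0 <= cls_mu c;
  cls_mu_sum1 : (fun n => \sum_(0 <= c < n) cls_mu c) @ \oo --> (1 : R);
  cls_D : nat -> probability X R }.

(* Expectation of g(x, x+, x-) under the sampling scheme:
   c+, c- ~ mu iid; x, x+ ~ D_{c+} iid; x- ~ D_{c-}. *)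
Definition Esample (D : taskdist) (g : X -> X -> X -> R) : R :=
  limn (fun n => \sum_(0 <= cp < n)
    limn (fun m => \sum_(0 <= cn < m)
      cls_mu D cp * cls_mu D cn *
      (\int[cls_D D cp]_x \int[cls_D D cp]_xp \int[cls_D D cn]_xn g x xp xn))).

Definition ell (v : R) : R := ln (1 + expR (- v)).

Definition Lcon (f : X -> 'rV[R]_dim) (D : taskdist) : R :=
  Esample D (fun x xp xn => ell (dotp (f x) (f xp) - dotp (f x) (f xn))).

Definition softmax1 (a b : R) : R := expR a / (expR a + expR b).
Definition softmax2 (a b : R) : R := expR b / (expR a + expR b).

Definition Ldis (g h : X -> 'rV[R]_dim) (D : taskdist) : R :=
  Esample D (fun x xp xn =>
    let ag := dotp (g x) (g xp) in let bg := dotp (g x) (g xn) in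
    let ah := dotp (h x) (h xp) in let bh := dotp (h x) (h xn) in
    - (softmax1 ah bh * ln (softmax1 ag bg) + softmax2 ah bh * ln (softmax2 ag bg))).

Definition Ldis_prev (k : nat -> nat -> R) (t : nat) (ft ftm1 : X -> 'rV[R]_dim)
  (D : nat -> taskdist) : R :=
  \sum_(1 <= j < t) k t j * Ldis ft ftm1 (D j).

Definition Ltrain1 (f1 : X -> 'rV[R]_dim) (D1 : taskdist) : R := Lcon f1 D1.

Definition Ltrain (lam : R) (k : nat -> nat -> R) (t : nat) (ft ftm1 : X -> 'rV[R]_dim)
  (Dt : taskdist) (D : nat -> taskdist) : R :=
  Lcon ft Dt + lam * Ldis_prev k t ft ftm1 D.

Definition Ltest (T : nat) (fT : X -> 'rV[R]_dim) (D : nat -> taskdist) : R :=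
  \sum_(1 <= t < T.+1) Lcon fT (D t).

Definition inf_Lcon (D : taskdist) : R :=
  inf [set Lcon f D | f in [set f | is_encoder f]].

End Defs.

Section Consts.
Context (R : realType).
Definition alpha : R := 2 * expR 2 / (1 + expR 2).

Definition gammat (lam : R) (k : nat -> nat -> R) (t : nat) : R :=
  \big[Num.min/(t%:R)^-1]_(1 <= j < t) (lam * k t j).
Definition gammat' (lam : R) (k : nat -> nat -> R) (t : nat) : R :=
  \big[Num.max/1]_(1 <= j < t) (lam * k t j).

Definition geomfac (T : nat) : R :=
  (T%:R - 1 - T%:R * alpha + alpha ^+ T) / (1 - alpha) ^+ 2.
End Consts.

(* Main.v *)
Require Import Defs.
From HB Require Import structures.
From mathcomp Require Import all_boot all_order all_algebra.
From mathcomp Require Import all_classical all_reals all_analysis.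
From mathcomp Require Import measurable_realfun.
From mathcomp Require Import ring lra.
Import Order.TTheory GRing.Theory Num.Theory.
Import numFieldNormedType.Exports.
Local Open Scope classical_set_scope.
Local Open Scope ring_scope.

Section Int1.
Context {R : realType} {d : measure_display} {T : measurableType d}.
Variable P : probability T R.

Lemma bnd_int (h : T -> R) (M : R) : measurable_fun setT h ->
  (forall x, `|h x| <= M) -> P.-integrable setT (EFin \o h).
Proof.
move=> mh hb; apply: measurable_bounded_integrable => //.
  exact: (@eq_ind_r _ 1%E (fun z => (z < +oo)%E) (ltry 1) _ (probability_setT P)).
rewrite /bounded_near; near=> M'; move=> x _ /=.
apply: le_trans (hb x) _; near: M'; apply: nbhs_pinfty_ge; exact: num_real.
Unshelve. all: by end_near. Qed.

Lemma Rint_cst1 (c : R) : \int[P]_x c = c.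
Proof.
rewrite Rintegral_cst //.
have -> : fine (P [set: T]) = 1 by rewrite (@probability_setT _ _ _ P).
by rewrite mulr1. Qed.

Lemma Rint_le (h1 h2 : T -> R) (M1 M2 : R) : measurable_fun setT h1 -> measurable_fun setT h2 ->
  (forall x, `|h1 x| <= M1) -> (forall x, `|h2 x| <= M2) ->
  (forall x, h1 x <= h2 x) -> \int[P]_x h1 x <= \int[P]_x h2 x.
Proof.
move=> m1 m2 b1 b2 le12; apply: le_Rintegral => //.
- exact: bnd_int b1.
- exact: bnd_int b2.
Qed.

Lemma Rint_add (h1 h2 : T -> R) (M1 M2 : R) : measurable_fun setT h1 -> measurable_fun setT h2 ->
  (forall x, `|h1 x| <= M1) -> (forall x, `|h2 x| <= M2) ->
  \int[P]_x (h1 x + h2 x) = \int[P]_x h1 x + \int[P]_x h2 x.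
Proof.
move=> m1 m2 b1 b2; apply: RintegralD => //.
- exact: bnd_int b1.
- exact: bnd_int b2.
Qed.

Lemma Rint_scale (h : T -> R) (M a : R) : measurable_fun setT h ->
  (forall x, `|h x| <= M) -> \int[P]_x (a * h x) = a * \int[P]_x h x.
Proof. by move=> m b; apply: RintegralZl => //; exact: bnd_int b. Qed.

Lemma Rint_bound (h : T -> R) (M : R) : measurable_fun setT h ->
  (forall x, `|h x| <= M) -> `|\int[P]_x h x| <= M.
Proof.
move=> m b; rewrite ler_norml; apply/andP; split.
- rewrite -(Rint_cst1 (- M)).
  apply: (Rint_le (fun=> - M) h `|M| M (measurable_cst _) m) => //.
  + by move=> x; rewrite normrN.
  + by move=> x; have := b x; rewrite ler_norml => /andP[].
- rewrite -[X in _ <= X](Rint_cst1 M).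
  apply: (Rint_le h (fun=> M) M `|M| m (measurable_cst _)) => //.
  by move=> x; have := b x; rewrite ler_norml => /andP[].
Qed.
End Int1.

Section IntMeas.
Context {R : realType} {d1 d2 : measure_display} {T1 : measurableType d1} {T2 : measurableType d2}.
Variable P : probability T2 R.

Lemma Rint_meas (h : T1 * T2 -> R) : measurable_fun setT h ->
  measurable_fun setT (fun x => \int[P]_y h (x, y)).
Proof.
move=> mh; rewrite /Rintegral.
have H : measurable_fun [set: T1] (fubini_F P (EFin \o h)).
  have -> : fubini_F P (EFin \o h) =
    (fun x => (\int[P]_y ((EFin \o h)^\+ (x, y)) - \int[P]_y ((EFin \o h)^\- (x, y)))%E).
    apply/funext => x; rewrite /fubini_F.
    have -> : (fun y => (EFin \o h) (x, y)) = (EFin \o h) \o pair x by [].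
    by rewrite integralE funepos_comp funeneg_comp.
  apply: emeasurable_funB.
  - apply: measurable_fun_fubini_tonelli_F.
    + apply: measurable_funepos; exact/measurable_EFinP.
    + by move=> z; exact: funepos_ge0.
  - apply: measurable_fun_fubini_tonelli_F.
    + apply: measurable_funeneg; exact/measurable_EFinP.
    + by move=> z; exact: funeneg_ge0.
exact: (measurableT_comp _ H).
Qed.
End IntMeas.

Section E3.
Context {R : realType} {d : measure_display} {X : measurableType d}.

Definition good (g : X -> X -> X -> R) :=
  (exists M : R, forall x y z, `|g x y z| <= M) /\
  measurable_fun setT (fun w : (X * X) * X => g w.1.1 w.1.2 w.2).

Lemma eq_Rint (P : probability X R) (f1 f2 : X -> R) :
  (forall x, f1 x = f2 x) -> \int[P]_x f1 x = \int[P]_x f2 x.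
Proof. by move=> e; congr Rintegral; apply/funext. Qed.

Variables (p n : probability X R).

Definition E3 (g : X -> X -> X -> R) :=
  \int[p]_x \int[p]_xp \int[n]_xn g x xp xn.

Lemma good_m1 {g : X -> X -> X -> R} : good g -> forall x xp, measurable_fun setT (fun xn => g x xp xn).
Proof.
move=> [_ mg] x xp.
have -> : (fun xn => g x xp xn) = (fun w : (X * X) * X => g w.1.1 w.1.2 w.2) \o pair (x, xp) by [].
exact: measurableT_comp mg (pair1_measurable _).
Qed.

Lemma good_m2' {g : X -> X -> X -> R} : good g ->
  measurable_fun setT (fun w : X * X => \int[n]_xn g w.1 w.2 xn).
Proof.
move=> [_ mg].
exact: (Rint_meas n (fun w : (X * X) * X => g w.1.1 w.1.2 w.2) mg).
Qed.

Lemma good_m2 {g : X -> X -> X -> R} : good g -> forall x, measurable_fun setT (fun xp => \int[n]_xn g x xp xn).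
Proof.
move=> gg x.
have -> : (fun xp => \int[n]_xn g x xp xn) = (fun w : X * X => \int[n]_xn g w.1 w.2 xn) \o pair x by [].
exact: (measurableT_comp (good_m2' gg) (pair1_measurable x)).
Qed.

Lemma good_m3 {g : X -> X -> X -> R} : good g -> measurable_fun setT (fun x => \int[p]_xp \int[n]_xn g x xp xn).
Proof.
move=> gg.
exact: (Rint_meas p (fun w : X * X => \int[n]_xn g w.1 w.2 xn) (good_m2' gg)).
Qed.

Lemma good_b1 {g : X -> X -> X -> R} {M : R} : good g -> (forall x y z, `|g x y z| <= M) ->
  forall x xp, `|\int[n]_xn g x xp xn| <= M.
Proof. by move=> gg hb x xp; apply: (Rint_bound n _ M (good_m1 gg x xp)) => xn. Qed.

Lemma good_b2 {g : X -> X -> X -> R} {M : R} : good g -> (forall x y z, `|g x y z| <= M) ->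
  forall x, `|\int[p]_xp \int[n]_xn g x xp xn| <= M.
Proof.
by move=> gg hb x; apply: (Rint_bound p _ M (good_m2 gg x)) => xp; exact: good_b1.
Qed.

Lemma E3_bound (g : X -> X -> X -> R) (M : R) : good g -> (forall x y z, `|g x y z| <= M) ->
  `|E3 g| <= M.
Proof.
by move=> gg hb; apply: (Rint_bound p _ M (good_m3 gg)) => x; exact: good_b2.
Qed.

Lemma good_add (g1 g2 : X -> X -> X -> R) : good g1 -> good g2 ->
  good (fun x y z => g1 x y z + g2 x y z).
Proof.
move=> [[M1 b1] m1] [[M2 b2] m2]; split.
  exists (M1 + M2) => x y z; apply: le_trans (ler_normD _ _) _; exact: lerD.
exact: measurable_funD.
Qed.

Lemma good_scale (a : R) (g : X -> X -> X -> R) : good g -> good (fun x y z => a * g x y z).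
Proof.
move=> [[M b] m]; split.
  exists (`|a| * M) => x y z; rewrite normrM; apply: ler_wpM2l => //.
apply: measurable_funM => //; exact: measurable_cst.
Qed.

Lemma good_cst (c : R) : good (fun _ _ _ => c).
Proof. split; first by exists `|c|. exact: measurable_cst. Qed.

Lemma E3_add (g1 g2 : X -> X -> X -> R) : good g1 -> good g2 ->
  E3 (fun x y z => g1 x y z + g2 x y z) = E3 g1 + E3 g2.
Proof.
move=> gg1 gg2; have [[M1 b1] _] := gg1; have [[M2 b2] _] := gg2.
rewrite /E3.
transitivity (\int[p]_x (\int[p]_xp \int[n]_xn g1 x xp xn + \int[p]_xp \int[n]_xn g2 x xp xn)).
  apply: eq_Rint => x.
  transitivity (\int[p]_xp (\int[n]_xn g1 x xp xn + \int[n]_xn g2 x xp xn)).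
    apply: eq_Rint => xp.
    exact: (Rint_add n _ _ M1 M2 (good_m1 gg1 x xp) (good_m1 gg2 x xp) (b1 x xp) (b2 x xp)).
  exact: (Rint_add p _ _ M1 M2 (good_m2 gg1 x) (good_m2 gg2 x) (good_b1 gg1 b1 x) (good_b1 gg2 b2 x)).
exact: (Rint_add p _ _ M1 M2 (good_m3 gg1) (good_m3 gg2) (good_b2 gg1 b1) (good_b2 gg2 b2)).
Qed.

Lemma E3_scale (a : R) (g : X -> X -> X -> R) : good g ->
  E3 (fun x y z => a * g x y z) = a * E3 g.
Proof.
move=> gg; have [[M b] _] := gg.
rewrite /E3.
transitivity (\int[p]_x (a * \int[p]_xp \int[n]_xn g x xp xn)).
  apply: eq_Rint => x.
  transitivity (\int[p]_xp (a * \int[n]_xn g x xp xn)).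
    apply: eq_Rint => xp.
    exact: (Rint_scale n _ M a (good_m1 gg x xp) (b x xp)).
  exact: (Rint_scale p _ M a (good_m2 gg x) (good_b1 gg b x)).
exact: (Rint_scale p _ M a (good_m3 gg) (good_b2 gg b)).
Qed.

Lemma E3_cst (c : R) : E3 (fun _ _ _ => c) = c.
Proof.
rewrite /E3.
transitivity (\int[p]_x c); last exact: Rint_cst1.
apply: eq_Rint => x.
transitivity (\int[p]_xp c); last exact: Rint_cst1.
apply: eq_Rint => xp; exact: Rint_cst1.
Qed.

Lemma E3_le (g1 g2 : X -> X -> X -> R) : good g1 -> good g2 ->
  (forall x y z, g1 x y z <= g2 x y z) -> E3 g1 <= E3 g2.
Proof.
move=> gg1 gg2 le12; have [[M1 b1] _] := gg1; have [[M2 b2] _] := gg2.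
rewrite /E3.
apply: (Rint_le p _ _ M1 M2 (good_m3 gg1) (good_m3 gg2) (good_b2 gg1 b1) (good_b2 gg2 b2)) => x.
apply: (Rint_le p _ _ M1 M2 (good_m2 gg1 x) (good_m2 gg2 x) (good_b1 gg1 b1 x) (good_b1 gg2 b2 x)) => xp.
exact: (Rint_le n _ _ M1 M2 (good_m1 gg1 x xp) (good_m1 gg2 x xp) (b1 x xp) (b2 x xp)).
Qed.

End E3.

Section Ser.
Context {R : realType}.
Variables (mu : nat -> R) (mu0 : forall c, 0 <= mu c)
  (mu1 : (fun n => \sum_(0 <= c < n) mu c) @ \oo --> (1 : R)).

Lemma nd_ps (w : nat -> R) : (forall c, 0 <= w c) ->
  {homo (fun N => \sum_(0 <= c < N) w c) : n m / (n <= m)%N >-> n <= m}.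
Proof.
move=> w0 n m nm /=; rewrite (big_cat_nat (leq0n n) nm) /= lerDl.
by apply: sumr_ge0 => *.
Qed.

Lemma smu_le1 N : \sum_(0 <= c < N) mu c <= 1.
Proof.
have <- : limn (fun n => \sum_(0 <= c < n) mu c) = 1 by exact: cvg_lim.
exact: (nondecreasing_cvgn_le (nd_ps _ mu0) (cvgP _ mu1) N).
Qed.

Definition ps (u : nat -> R) N := \sum_(0 <= c < N) mu c * u c.
Definition ser (u : nat -> R) := limn (ps u).

Lemma ps_cvg (u : nat -> R) (M : R) : (forall c, `|u c| <= M) -> cvgn (ps u).
Proof.
move=> b.
have M0 : 0 <= M by apply: le_trans (b 0%N).
have -> : ps u = (fun N => ps (fun c => u c + M) N - M * \sum_(0 <= c < N) mu c).
  apply/funext => N; rewrite /ps mulr_sumr -sumrB; apply: eq_bigr => c _.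
  by rewrite mulrDr [M * _]mulrC addrK.
apply: is_cvgB.
  apply: nondecreasing_is_cvgn.
    apply: nd_ps => c; apply: mulr_ge0 => //.
    by have := b c; rewrite ler_norml -lerBlDr sub0r => /andP[].
  exists (2 * M) => _ [N _ <-].
  apply: (@le_trans _ _ (\sum_(0 <= c < N) mu c * (2 * M))).
    apply: ler_sum => c _; apply: ler_wpM2l => //.
    by have := b c; rewrite ler_norml => /andP[_ h]; lra.
  rewrite -mulr_suml -[X in _ <= X]mul1r; apply: ler_wpM2r; first exact: mulr_ge0.
  exact: smu_le1.
apply: is_cvgM; first exact: is_cvg_cst.
exact: cvgP mu1.
Qed.

Lemma ser_add (u v : nat -> R) (Mu Mv : R) : (forall c, `|u c| <= Mu) -> (forall c, `|v c| <= Mv) ->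
  ser (fun c => u c + v c) = ser u + ser v.
Proof.
move=> bu bv; rewrite /ser.
have -> : ps (fun c => u c + v c) = (fun N => ps u N + ps v N).
  by apply/funext => N; rewrite /ps -big_split; apply: eq_bigr => c _; rewrite mulrDr.
apply: limD; [exact: ps_cvg bu| exact: ps_cvg bv].
Qed.

Lemma ser_scale (a : R) (u : nat -> R) (M : R) : (forall c, `|u c| <= M) ->
  ser (fun c => a * u c) = a * ser u.
Proof.
move=> bu; rewrite /ser.
have -> : ps (fun c => a * u c) = (fun N => a * ps u N).
  by apply/funext => N; rewrite /ps mulr_sumr; apply: eq_bigr => c _; rewrite mulrCA.
rewrite (limM (f := fun=> a)); [by rewrite lim_cst| exact: is_cvg_cst| exact: ps_cvg bu].
Qed.

Lemma ser_cst (c : R) : ser (fun _ => c) = c.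
Proof.
rewrite /ser.
have -> : ps (fun _ => c) = (fun N => c * \sum_(0 <= k < N) mu k).
  by apply/funext => N; rewrite /ps mulr_sumr; apply: eq_bigr => k _; rewrite mulrC.
rewrite (limM (f := fun=> c)); [|exact: is_cvg_cst| exact: cvgP mu1].
by rewrite lim_cst // (cvg_lim _ mu1) // mulr1.
Qed.

Lemma ser_le (u v : nat -> R) (Mu Mv : R) : (forall c, `|u c| <= Mu) -> (forall c, `|v c| <= Mv) ->
  (forall c, u c <= v c) -> ser u <= ser v.
Proof.
move=> bu bv uv; rewrite /ser; apply: ler_lim; [exact: ps_cvg bu|exact: ps_cvg bv|].
near=> N; apply: ler_sum => c _; exact: ler_wpM2l.
Unshelve. all: by end_near. Qed.

Lemma ser_bound (u : nat -> R) (M : R) : (forall c, `|u c| <= M) -> `|ser u| <= M.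
Proof.
move=> bu; rewrite ler_norml; apply/andP; split.
  rewrite -[X in X <= _](ser_cst (- M)).
  apply: (ser_le _ _ `|M| M) => // c.
    by rewrite normrN.
  by have := bu c; rewrite ler_norml => /andP[].
rewrite -[X in _ <= X](ser_cst M).
apply: (ser_le _ _ M `|M|) => // c.
by have := bu c; rewrite ler_norml => /andP[].
Qed.

End Ser.

Section ES.
Context {R : realType} {d : measure_display} {X : measurableType d}.
Variable D : taskdist X R.
Let mu := cls_mu D.
Let mu0 := cls_mu_ge0 D.
Let mu1 := cls_mu_sum1 D.
Let A (g : X -> X -> X -> R) cp cn := E3 (cls_D D cp) (cls_D D cn) g.

Lemma A_bound {g M} : good g -> (forall x y z, `|g x y z| <= M) -> forall cp cn, `|A g cp cn| <= M.
Proof. by move=> gg b cp cn; exact: E3_bound. Qed.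

Lemma Esample_ser {g} : good g -> Esample D g = ser mu (fun cp => ser mu (A g cp)).
Proof.
move=> gg; have [[M b] _] := gg.
rewrite /Esample /ser /ps; congr (lim (_ @ \oo)); apply/funext => N; apply: eq_bigr => cp _.
have -> : (fun m => \sum_(0 <= cn < m) cls_mu D cp * cls_mu D cn *
   \int[cls_D D cp]_x \int[cls_D D cp]_xp \int[cls_D D cn]_xn g x xp xn) =
   (fun m => mu cp * \sum_(0 <= cn < m) mu cn * A g cp cn).
  by apply/funext => m; rewrite mulr_sumr; apply: eq_bigr => cn _; rewrite mulrA.
rewrite (limM (f := fun=> mu cp)); [by rewrite lim_cst| exact: is_cvg_cst|].
exact: (@ps_cvg _ mu mu0 mu1 _ M (A_bound gg b cp)).
Qed.

Lemma Es_bound g M : good g -> (forall x y z, `|g x y z| <= M) -> `|Esample D g| <= M.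
Proof.
move=> gg b; rewrite Esample_ser //.
apply: (@ser_bound _ mu mu0 mu1) => cp.
exact: (@ser_bound _ mu mu0 mu1 _ M (A_bound gg b cp)).
Qed.

Lemma Es_add g1 g2 : good g1 -> good g2 ->
  Esample D (fun x y z => g1 x y z + g2 x y z) = Esample D g1 + Esample D g2.
Proof.
move=> gg1 gg2; have [[M1 b1] _] := gg1; have [[M2 b2] _] := gg2.
rewrite (Esample_ser (good_add _ _ gg1 gg2)) (Esample_ser gg1) (Esample_ser gg2).
transitivity (ser mu (fun cp => ser mu (A g1 cp) + ser mu (A g2 cp))).
  congr (ser mu _); apply/funext => cp.
  transitivity (ser mu (fun cn => A g1 cp cn + A g2 cp cn)).
    congr (ser mu _); apply/funext => cn.
    exact: (E3_add _ _ _ _ gg1 gg2).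
  exact: (@ser_add _ mu mu0 mu1 _ _ M1 M2 (A_bound gg1 b1 cp) (A_bound gg2 b2 cp)).
apply: (@ser_add _ mu mu0 mu1 _ _ M1 M2) => cp.
  exact: (@ser_bound _ mu mu0 mu1 _ M1 (A_bound gg1 b1 cp)).
exact: (@ser_bound _ mu mu0 mu1 _ M2 (A_bound gg2 b2 cp)).
Qed.

Lemma Es_scale (a : R) g : good g ->
  Esample D (fun x y z => a * g x y z) = a * Esample D g.
Proof.
move=> gg; have [[M b] _] := gg.
rewrite (Esample_ser (good_scale a _ gg)) (Esample_ser gg).
transitivity (ser mu (fun cp => a * ser mu (A g cp))).
  congr (ser mu _); apply/funext => cp.
  transitivity (ser mu (fun cn => a * A g cp cn)).
    congr (ser mu _); apply/funext => cn.
    exact: (E3_scale _ _ a _ gg).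
  exact: (@ser_scale _ mu mu0 mu1 a _ M (A_bound gg b cp)).
apply: (@ser_scale _ mu mu0 mu1 a _ M) => cp.
exact: (@ser_bound _ mu mu0 mu1 _ M (A_bound gg b cp)).
Qed.

Lemma Es_cst (c : R) : Esample D (fun _ _ _ => c) = c.
Proof.
rewrite (Esample_ser (good_cst c)).
transitivity (ser mu (fun _ => c)); last exact: (@ser_cst _ mu mu1 c).
congr (ser mu _); apply/funext => cp.
transitivity (ser mu (fun _ => c)); last exact: (@ser_cst _ mu mu1 c).
congr (ser mu _); apply/funext => cn.
exact: E3_cst.
Qed.

Lemma Es_le g1 g2 : good g1 -> good g2 -> (forall x y z, g1 x y z <= g2 x y z) ->
  Esample D g1 <= Esample D g2.
Proof.
move=> gg1 gg2 le12; have [[M1 b1] _] := gg1; have [[M2 b2] _] := gg2.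
rewrite (Esample_ser gg1) (Esample_ser gg2).
apply: (@ser_le _ mu mu0 mu1 _ _ M1 M2).
- move=> cp; exact: (@ser_bound _ mu mu0 mu1 _ M1 (A_bound gg1 b1 cp)).
- move=> cp; exact: (@ser_bound _ mu mu0 mu1 _ M2 (A_bound gg2 b2 cp)).
move=> cp; apply: (@ser_le _ mu mu0 mu1 _ _ M1 M2 (A_bound gg1 b1 cp) (A_bound gg2 b2 cp)).
by move=> cn; exact: (E3_le _ _ _ _ gg1 gg2).
Qed.
End ES.

Section Reals.
Context {R : realType}.

Definition sgl (u : R) : R := (1 + expR u)^-1.

Lemma pos1e (u : R) : 0 < 1 + expR u.
Proof. by apply: addr_gt0 => //; exact: expR_gt0. Qed.

Lemma ell_ge0 (v : R) : 0 <= ell v.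
Proof. by apply: ln_ge0; rewrite lerDl expR_ge0. Qed.

Lemma ell_le (v : R) : -2 <= v -> ell v <= ln (1 + expR 2).
Proof.
move=> hv; rewrite /ell ler_ln ?posrE ?pos1e // lerD2l ler_expR; lra.
Qed.

Lemma sgl_ge0 (u : R) : 0 <= sgl u.
Proof. by rewrite /sgl invr_ge0 ltW ?pos1e. Qed.

Lemma sgl_le1 (u : R) : sgl u <= 1.
Proof. by rewrite /sgl invr_le1 ?pos1e ?unitfE ?gt_eqF ?pos1e // lerDl expR_ge0. Qed.

Lemma alpha_gt0 : 0 < alpha R.
Proof. by rewrite /alpha divr_gt0 ?pos1e // mulr_gt0 ?expR_gt0. Qed.

Lemma sgl_le (u : R) : -2 <= u -> sgl u <= alpha R / 2.
Proof.
move=> hu; rewrite /sgl /alpha.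
have -> : 2 * expR 2 / (1 + expR 2) / 2 = (1 + expR (-2))^-1 :> R.
  rewrite expRN; have h := expR_gt0 (2 : R); field.
  by apply/andP; split; lra.
rewrite lef_pV2 ?posrE ?pos1e // lerD2l ler_expR //.
Qed.

Lemma sq_ge (q : R) : 0 < q -> ln ((alpha R / 2) / q) >= 1 - 2 * q / alpha R.
Proof.
move=> q0; have a0 := alpha_gt0.
have y0 : 0 < 2 * q / alpha R by rewrite divr_gt0 // mulr_gt0.
have H0 : -1 < 2 * q / alpha R - 1 by lra.
have := @le_ln1Dx R (2 * q / alpha R - 1) H0.
rewrite (_ : 1 + _ = 2 * q / alpha R); last by ring.
have -> : (alpha R / 2) / q = (2 * q / alpha R)^-1.
  by rewrite invf_div; field; rewrite gt_eqF.
have -> : ln ((2 * q / alpha R)^-1) = - ln (2 * q / alpha R).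
  exact: lnV.
lra.
Qed.

Lemma ell_sgl (u : R) : ell u = - ln (1 - sgl u).
Proof.
rewrite /ell /sgl.
have -> : 1 - (1 + expR u)^-1 = (1 + expR (- u))^-1.
  rewrite expRN; have h := expR_gt0 u; field.
  by apply/andP; split; lra.
by rewrite lnV ?posrE ?pos1e // opprK.
Qed.

Lemma up_pt (u w : R) : -2 <= w ->
  0 <= alpha R * ell u + sgl u * w + (2 - alpha R + alpha R * ln (alpha R / 2)).
Proof.
move=> hw.
set s := sgl u; set q := 1 - s.
have s0 : 0 <= s by exact: sgl_ge0.
have q0 : 0 < q.
  rewrite /q /s /sgl subr_gt0 invf_lt1 ?pos1e // ltrDl expR_gt0 //.
have a0 := alpha_gt0.
have hsw : - 2 * s <= s * w by rewrite [s * w]mulrC; exact: ler_wpM2r.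
have := sq_ge q q0.
rewrite lnM ?posrE ?invr_gt0 ?divr_gt0 // lnV ?posrE // ell_sgl -/s -/q.
move=> H.
have H2 : alpha R * (ln (alpha R / 2) - ln q) >= alpha R * (1 - 2 * q / alpha R).
  by rewrite ler_wpM2l // ltW.
have H3 : alpha R * (1 - 2 * q / alpha R) = alpha R - 2 * q.
  by field; lra.
rewrite H3 in H2; rewrite /q in H2 hsw; lra.
Qed.

Lemma lo_pt (u w : R) : -2 <= u -> w <= 2 ->
  alpha R * ell u + sgl u * w - (alpha R * ln (1 + expR 2) + alpha R) <= 0.
Proof.
move=> hu hw.
have a0 := alpha_gt0.
have h1 : alpha R * ell u <= alpha R * ln (1 + expR 2).
  by apply: ler_wpM2l; [exact: ltW| exact: ell_le].
have s0 := sgl_ge0 u; have s1 := sgl_le u hu.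
have h2 : sgl u * w <= sgl u * 2 by apply: ler_wpM2l.
lra.
Qed.

Lemma dis_ge0 (v s : R) : 0 <= s -> s <= 1 -> 0 <= ell v + s * v.
Proof.
move=> s0 s1; have [v0|v0] := leP 0 v.
  by apply: addr_ge0; [exact: ell_ge0| exact: mulr_ge0].
have : - v <= ell v.
  rewrite /ell -[X in X <= _](expRK (- v)) ler_ln ?posrE ?expR_gt0 ?pos1e //.
  by rewrite lerDr.
have := ler_wnM2r (ltW v0) s1; rewrite mul1r.
lra.
Qed.

Lemma sgl_exp (u : R) : sgl u = expR (- ln (1 + expR u)).
Proof. by rewrite expRN lnK // posrE pos1e. Qed.

Lemma sm1E (a b : R) : softmax1 a b = (1 + expR (b - a))^-1.
Proof.
rewrite /softmax1 expRD expRN.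
have ha := expR_gt0 a; have hb := expR_gt0 b.
field; by rewrite !gt_eqF // addr_gt0.
Qed.

Lemma sm2E (a b : R) : softmax2 a b = (1 + expR (a - b))^-1.
Proof.
rewrite /softmax2 expRD expRN.
have ha := expR_gt0 a; have hb := expR_gt0 b.
field; by rewrite !gt_eqF // addr_gt0.
Qed.

Lemma ln1e (u : R) : ln (1 + expR u) = u + ln (1 + expR (- u)).
Proof.
have -> : 1 + expR u = expR u * (1 + expR (- u)).
  rewrite mulrDr mulr1 -expRD subrr expR0; ring.
by rewrite lnM ?posrE ?expR_gt0 ?pos1e // expRK.
Qed.

Lemma dis_id (a b c e : R) :
  - (softmax1 c e * ln (softmax1 a b) + softmax2 c e * ln (softmax2 a b)) =
  ell (a - b) + sgl (c - e) * (a - b).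
Proof.
have s12 : softmax1 c e + softmax2 c e = 1.
  by rewrite /softmax1 /softmax2 -mulrDl divff // gt_eqF // addr_gt0 // expR_gt0.
rewrite (sm1E a b) (sm2E a b) !lnV ?posrE ?pos1e // ln1e /ell.
rewrite /sgl -(sm2E c e) opprB.
have -> : - (a - b) = b - a by ring.
rewrite -[softmax1 c e](addrK (softmax2 c e)) s12.
rewrite [in RHS]ln1e.
have -> : - (b - a) = a - b by ring.
ring.
Qed.

End Reals.

Section Enc.
Context {R : realType} {d : measure_display} {X : measurableType d} {dim : nat}.

Definition vv (f : X -> 'rV[R]_dim) x y z := dotp (f x) (f y) - dotp (f x) (f z).

Lemma unit_dot (f : X -> 'rV[R]_dim) x : is_encoder f -> dotp (f x) (f x) = 1.
Proof.
move=> [_ hn]; have h := hn x.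
have h0 : 0 <= dotp (f x) (f x) by apply: sumr_ge0 => i _; by rewrite -expr2 sqr_ge0.
by rewrite -(sqr_sqrtr h0) h expr1n.
Qed.

Lemma dot_bound (f : X -> 'rV[R]_dim) x y : is_encoder f -> `|dotp (f x) (f y)| <= 1.
Proof.
move=> hf; have ux := unit_dot _ x hf; have uy := unit_dot _ y hf.
have key : forall u v : R, - ((u * u + v * v) / 2) <= u * v <= (u * u + v * v) / 2.
  move=> u v; have h1 := sqr_ge0 (u + v); have h2 := sqr_ge0 (u - v).
  rewrite !expr2 in h1 h2; apply/andP; split; nra.
rewrite ler_norml; apply/andP; split.
- apply: (@le_trans _ _ (\sum_(i < dim) - ((f x ord0 i * f x ord0 i + f y ord0 i * f y ord0 i) / 2))).
    rewrite sumrN -mulr_suml big_split /= -/(dotp (f x) (f x)) -/(dotp (f y) (f y)) ux uy.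
    lra.
  by apply: ler_sum => i _; have /andP[] := key (f x ord0 i) (f y ord0 i).
- apply: (@le_trans _ _ (\sum_(i < dim) ((f x ord0 i * f x ord0 i + f y ord0 i * f y ord0 i) / 2))).
    by apply: ler_sum => i _; have /andP[] := key (f x ord0 i) (f y ord0 i).
  rewrite -mulr_suml big_split /= -/(dotp (f x) (f x)) -/(dotp (f y) (f y)) ux uy.
  lra.
Qed.

Lemma vv_ge (f : X -> 'rV[R]_dim) x y z : is_encoder f -> -2 <= vv f x y z.
Proof.
move=> hf; have := dot_bound _ x y hf; have := dot_bound _ x z hf.
rewrite /vv !ler_norml => /andP[h1 h2] /andP[h3 h4]; lra.
Qed.

Lemma vv_le (f : X -> 'rV[R]_dim) x y z : is_encoder f -> vv f x y z <= 2.
Proof.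
move=> hf; have := dot_bound _ x y hf; have := dot_bound _ x z hf.
rewrite /vv !ler_norml => /andP[h1 h2] /andP[h3 h4]; lra.
Qed.

Lemma meas_sum {d' : measure_display} {T : measurableType d'} (F : 'I_dim -> T -> R) :
  (forall i, measurable_fun setT (F i)) -> measurable_fun setT (fun w => \sum_(i < dim) F i w).
Proof.
move=> mF.
have -> : (fun w => \sum_(i < dim) F i w) = \sum_(i < dim) F i by rewrite fct_sumE.
apply: (big_ind (fun h : T -> R => measurable_fun setT h)) => //.
- exact: measurable_cst.
- by move=> f g mf mg; exact: measurable_funD.
Qed.

Lemma meas_dot (f : X -> 'rV[R]_dim) (p1 p2 : (X * X) * X -> X) : is_encoder f ->
  measurable_fun setT p1 -> measurable_fun setT p2 ->
  measurable_fun setT (fun w => dotp (f (p1 w)) (f (p2 w))).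
Proof.
move=> [hm _] m1 m2; rewrite /dotp.
apply: (meas_sum (fun i w => f (p1 w) ord0 i * f (p2 w) ord0 i)) => i.
apply: measurable_funM.
- exact: (measurableT_comp (hm i) m1).
- exact: (measurableT_comp (hm i) m2).
Qed.

Lemma meas_vv (f : X -> 'rV[R]_dim) : is_encoder f ->
  measurable_fun setT (fun w : (X * X) * X => vv f w.1.1 w.1.2 w.2).
Proof.
move=> hf; rewrite /vv.
have m11 : measurable_fun setT (fun w : (X * X) * X => w.1.1).
  exact: (measurableT_comp measurable_fst measurable_fst).
have m12 : measurable_fun setT (fun w : (X * X) * X => w.1.2).
  exact: (measurableT_comp measurable_snd measurable_fst).
apply: measurable_funB.
- exact: (meas_dot _ _ _ hf m11 m12).
- exact: (meas_dot _ _ _ hf m11 measurable_snd).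
Qed.

Lemma meas_ell : measurable_fun setT (@ell R).
Proof.
rewrite /ell.
have -> : (fun v : R => ln (1 + expR (- v))) = (@ln R) \o (fun v => 1 + expR (- v)) by [].
apply: measurableT_comp; first exact: measurable_ln.
apply: measurable_funD; first exact: measurable_cst.
have -> : (fun v : R => expR (- v)) = (@expR R) \o (fun v => - v) by [].
apply: measurableT_comp; first exact: measurable_expR.
exact: measurable_funN.
Qed.

Lemma meas_sgl : measurable_fun setT (@sgl R).
Proof.
have -> : @sgl R = (@expR R) \o (fun v => - ln (1 + expR v)).
  by apply/funext => v; rewrite /= sgl_exp.
apply: measurableT_comp; first exact: measurable_expR.
apply: measurable_funN.
have -> : (fun v : R => ln (1 + expR v)) = (@ln R) \o (fun v => 1 + expR v) by [].
apply: measurableT_comp; first exact: measurable_ln.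
apply: measurable_funD; first exact: measurable_cst.
exact: measurable_expR.
Qed.

Lemma good_ell (f : X -> 'rV[R]_dim) : is_encoder f -> good (fun x y z => ell (vv f x y z)).
Proof.
move=> hf; split.
  exists (ln (1 + expR 2)) => x y z.
  by rewrite ger0_norm ?ell_ge0 // ell_le // (vv_ge _ _ _ _ hf).
exact: (measurableT_comp meas_ell (meas_vv _ hf)).
Qed.

Lemma good_sv (g h : X -> 'rV[R]_dim) : is_encoder g -> is_encoder h ->
  good (fun x y z => sgl (vv h x y z) * vv g x y z).
Proof.
move=> hg hh; split.
  exists 2 => x y z; rewrite normrM.
  have s0 := sgl_ge0 (vv h x y z); have s1 := sgl_le1 (vv h x y z).
  have v1 := vv_ge g x y z hg; have v2 := vv_le g x y z hg.
  rewrite ger0_norm //; apply: (@le_trans _ _ (1 * `|vv g x y z|)).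
    by apply: ler_wpM2r.
  by rewrite mul1r ler_norml; apply/andP; split.
apply: measurable_funM.
- exact: (measurableT_comp meas_sgl (meas_vv _ hh)).
- exact: (meas_vv _ hg).
Qed.

End Enc.

Section Key.
Context {R : realType} {d : measure_display} {X : measurableType d} {dim : nat}.
Implicit Types (g h : X -> 'rV[R]_dim) (D : taskdist X R).

Lemma LconE g D : Lcon g D = Esample D (fun x y z => ell (vv g x y z)).
Proof. by []. Qed.

Lemma LdisE g h D : Ldis g h D =
  Esample D (fun x y z => ell (vv g x y z) + sgl (vv h x y z) * vv g x y z).
Proof.
rewrite /Ldis; congr Esample; apply/funext => x; apply/funext => y; apply/funext => z.
by rewrite /= dis_id.
Qed.

Lemma Ldis_split g h D : is_encoder g -> is_encoder h ->
  Ldis g h D = Lcon g D + Esample D (fun x y z => sgl (vv h x y z) * vv g x y z).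
Proof.
move=> hg hh; rewrite LdisE LconE.
exact: (Es_add D _ _ (good_ell _ hg) (good_sv _ _ hg hh)).
Qed.

Lemma Lcon_ge0 g D : is_encoder g -> 0 <= Lcon g D.
Proof.
move=> hg; rewrite LconE -(Es_cst D 0).
apply: (Es_le D _ _ (good_cst 0) (good_ell _ hg)) => x y z; exact: ell_ge0.
Qed.

Lemma Ldis_ge0 g h D : is_encoder g -> is_encoder h -> 0 <= Ldis g h D.
Proof.
move=> hg hh; rewrite LdisE -(Es_cst D 0).
apply: (Es_le D _ _ (good_cst 0) (good_add _ _ (good_ell _ hg) (good_sv _ _ hg hh))) => x y z.
by apply: dis_ge0; [exact: sgl_ge0| exact: sgl_le1].
Qed.

Lemma comb3 g h D (c : R) : is_encoder g -> is_encoder h ->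
  Esample D (fun x y z => alpha R * ell (vv h x y z) + sgl (vv h x y z) * vv g x y z + c) =
  alpha R * Lcon h D + Esample D (fun x y z => sgl (vv h x y z) * vv g x y z) + c.
Proof.
move=> hg hh.
have gA := good_scale (alpha R) _ (good_ell _ hh).
have gB := good_sv _ _ hg hh.
rewrite (Es_add D _ _ (good_add _ _ gA gB) (good_cst c)) (Es_cst D c).
rewrite (Es_add D _ _ gA gB) (Es_scale D _ _ (good_ell _ hh)).
by [].
Qed.

Lemma aux_up (C A K c a : R) : 0 <= a * A + K + c -> C <= a * A + (C + K) + c.
Proof. lra. Qed.

Lemma aux_lo (C A K c a : R) : a * A + K + - c <= 0 -> a * A + (C + K) - c <= C.
Proof. lra. Qed.

Lemma key_up g h D : is_encoder g -> is_encoder h ->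
  Lcon g D <= alpha R * Lcon h D + Ldis g h D + (2 - alpha R + alpha R * ln (alpha R / 2)).
Proof.
move=> hg hh.
have H : 0 <= Esample D (fun x y z => alpha R * ell (vv h x y z) + sgl (vv h x y z) * vv g x y z
    + (2 - alpha R + alpha R * ln (alpha R / 2))).
  rewrite -(Es_cst D 0).
  apply: (Es_le D _ _ (good_cst 0)).
    exact: (good_add _ _ (good_add _ _ (good_scale _ _ (good_ell _ hh)) (good_sv _ _ hg hh)) (good_cst _)).
  move=> x y z; apply: up_pt; exact: vv_ge.
rewrite (comb3 _ _ _ _ hg hh) in H.
rewrite (Ldis_split _ _ D hg hh).
exact: aux_up.
Qed.

Lemma key_lo g h D : is_encoder g -> is_encoder h ->
  alpha R * Lcon h D + Ldis g h D - (alpha R * ln (1 + expR 2) + alpha R) <= Lcon g D.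
Proof.
move=> hg hh.
have H : Esample D (fun x y z => alpha R * ell (vv h x y z) + sgl (vv h x y z) * vv g x y z
    + (- (alpha R * ln (1 + expR 2) + alpha R))) <= 0.
  rewrite -(Es_cst D 0).
  apply: (Es_le D _ _ _ (good_cst 0)).
    exact: (good_add _ _ (good_add _ _ (good_scale _ _ (good_ell _ hh)) (good_sv _ _ hg hh)) (good_cst _)).
  move=> x y z; apply: lo_pt; [exact: vv_ge| exact: vv_le].
rewrite (comb3 _ _ _ _ hg hh) in H.
rewrite (Ldis_split _ _ D hg hh).
exact: aux_lo.
Qed.

Lemma Lcon_ge_inf g D : is_encoder g -> inf_Lcon dim D <= Lcon g D.
Proof.
move=> hg; apply: ge_inf; last by exists g.
exists 0 => _ [f hf <-]; exact: Lcon_ge0.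
Qed.

End Key.

Section Unroll.
Context {R : realFieldType}.
Definition gf (a : R) (T : nat) : R := (T%:R - 1 - T%:R * a + a ^+ T) / (1 - a) ^+ 2.
Lemma gf1 (a : R) : gf a 1 = 0.
Proof. by rewrite /gf expr1 mul1r subrr sub0r addNr mul0r. Qed.
Lemma gfS (a : R) (T : nat) : a != 1 -> gf a T.+1 = a * gf a T + T%:R.
Proof.
move=> a1; rewrite /gf exprS -addn1 natrD.
have h : 1 - a != 0 by rewrite subr_eq0 eq_sym.
field. exact: h.
Qed.
End Unroll.
Section S2.
Context {R : realFieldType}.
Lemma sum_shift (a : R) (Z : nat -> R) (T : nat) : (1 <= T)%N ->
  \sum_(2 <= t < T.+2) a ^+ (T.+1 - t) * Z t =
  a * \sum_(2 <= t < T.+1) a ^+ (T - t) * Z t + Z T.+1.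
Proof.
move=> T1; rewrite big_nat_recr //=.
rewrite subnn expr0 mul1r mulr_sumr; congr (_ + _).
apply: eq_big_nat => t /andP[_ ht].
by rewrite subSn // exprS mulrA.
Qed.

Lemma unroll (a c : R) (S Z : nat -> R) (T0 : nat) :
  0 < a -> a != 1 ->
  (forall t, (2 <= t <= T0)%N -> S t <= a * S t.-1 + Z t + c * (t.-1)%:R) ->
  forall T, (1 <= T <= T0)%N ->
  S T <= a ^+ (T - 1) * S 1%N + \sum_(2 <= t < T.+1) a ^+ (T - t) * Z t + c * gf a T.
Proof.
move=> a0 a1 hS; elim=> [//|T IH] /andP[_ hT].
have [T0'|TP] := eqVneq T 0%N.
  by rewrite T0' /= gf1 big_geq // expr0 mul1r addr0 mulr0 addr0.
have T1 : (1 <= T)%N by rewrite lt0n.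
have := hS T.+1; rewrite /= ltnS T1 hT => /(_ isT) h.
have IH' := IH ltac:(by rewrite T1 (ltnW hT)).
apply: le_trans h _.
rewrite sum_shift // gfS // subn1 /=.
have -> : a ^+ T = a * a ^+ (T - 1) by rewrite -exprS subn1 prednK // lt0n.
have : a * S T <= a * (a ^+ (T - 1) * S 1%N + \sum_(2 <= t < T.+1) a ^+ (T - t) * Z t + c * gf a T).
  by rewrite ler_pM2l.
move=> H; apply: le_trans (lerD (lerD H (lexx (Z T.+1))) (lexx (c * T%:R))) _.
rewrite le_eqVlt; apply/orP; left; apply/eqP; ring.
Qed.

End S2.


Section Unroll2.
Context {R : realFieldType}.

Lemma unroll_lo (a c : R) (S Z : nat -> R) (T0 : nat) :
  0 < a -> a != 1 ->
  (forall t, (2 <= t <= T0)%N -> a * S t.-1 + Z t - c * (t.-1)%:R <= S t) ->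
  forall T, (1 <= T <= T0)%N ->
  a ^+ (T - 1) * S 1%N + \sum_(2 <= t < T.+1) a ^+ (T - t) * Z t - c * gf a T <= S T.
Proof.
move=> a0 a1 hS T hT.
have := @unroll R a c (fun t => - S t) (fun t => - Z t) T0 a0 a1.
have H : forall t, (2 <= t <= T0)%N -> - S t <= a * - S t.-1 + - Z t + c * (t.-1)%:R.
  move=> t ht; have := hS t ht; lra.
move=> /(_ H T hT).
have -> : \sum_(2 <= t < T.+1) a ^+ (T - t) * - Z t = - \sum_(2 <= t < T.+1) a ^+ (T - t) * Z t.
  by rewrite -sumrN; apply: eq_bigr => t _; rewrite mulrN.
lra.
Qed.

Lemma bigmin_le_term (x0 : R) (r : seq nat) (F : nat -> R) j :
  j \in r -> \big[Num.min/x0]_(i <- r) F i <= F j.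
Proof.
elim: r => [//|i r IH]; rewrite inE big_cons => /orP[/eqP->|jr].
  by rewrite ge_min lexx.
by rewrite ge_min IH // orbT.
Qed.

Lemma bigmin_le_init (x0 : R) (r : seq nat) (F : nat -> R) :
  \big[Num.min/x0]_(i <- r) F i <= x0.
Proof.
elim: r => [|i r IH]; first by rewrite big_nil.
by rewrite big_cons ge_min IH orbT.
Qed.

Lemma bigmin_gt0 (x0 : R) (r : seq nat) (F : nat -> R) :
  0 < x0 -> (forall i, i \in r -> 0 < F i) -> 0 < \big[Num.min/x0]_(i <- r) F i.
Proof.
move=> x00; elim: r => [|i r IH] hF; first by rewrite big_nil.
rewrite big_cons lt_min hF ?mem_head // IH // => j jr.
by apply: hF; rewrite inE jr orbT.
Qed.

Lemma bigmax_ge_term (x0 : R) (r : seq nat) (F : nat -> R) j :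
  j \in r -> F j <= \big[Num.max/x0]_(i <- r) F i.
Proof.
elim: r => [//|i r IH]; rewrite inE big_cons => /orP[/eqP->|jr].
  by rewrite le_max lexx.
by rewrite le_max IH // orbT.
Qed.

Lemma bigmax_ge_init (x0 : R) (r : seq nat) (F : nat -> R) :
  x0 <= \big[Num.max/x0]_(i <- r) F i.
Proof.
elim: r => [|i r IH]; first by rewrite big_nil.
by rewrite big_cons le_max IH orbT.
Qed.

Lemma comb_up (A Sp LD Lc Lp I a c n g lam : R) :
  A <= a * Sp + LD + c * n -> LD <= lam * Lp / g -> Lc <= Lc / g + (1 - g^-1) * I ->
  A + Lc <= a * Sp + ((Lc + lam * Lp) / g + (1 - g^-1) * I) + c * n.
Proof. rewrite mulrDl; lra. Qed.

Lemma comb_lo (A Sp LD Lc Lp a c n g lam : R) :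
  a * Sp + LD - c * n <= A -> lam * Lp / g <= LD -> Lc / g <= Lc ->
  a * Sp + (Lc + lam * Lp) / g - c * n <= A + Lc.
Proof. rewrite mulrDl; lra. Qed.

End Unroll2.

Section Main.
Context {R : realType} {d : measure_display} {X : measurableType d} {dim : nat}.
Variables (D : nat -> taskdist X R) (f : nat -> X -> 'rV[R]_dim) (lam : R)
  (k : nat -> nat -> R) (T : nat).
Hypothesis hf : forall t, (1 <= t <= T)%N -> is_encoder (f t).
Hypothesis hlam : 0 < lam.
Hypothesis hkpos : forall t j, (2 <= t <= T)%N -> (1 <= j < t)%N -> 0 < k t j.

Lemma gam_pos t : (2 <= t <= T)%N -> 0 < gammat lam k t.
Proof.
move=> ht; apply: bigmin_gt0.
  by rewrite invr_gt0 ltr0n; case/andP: ht => h _; exact: (leq_trans _ h).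
by move=> j; rewrite mem_index_iota => hj; apply: mulr_gt0 => //; exact: hkpos.
Qed.

Lemma gam_le1 t : (2 <= t <= T)%N -> gammat lam k t <= 1.
Proof.
move=> ht; apply: le_trans (bigmin_le_init _ _ _) _.
case/andP: ht => h _.
have h1 : (0 < t)%N by exact: (leq_trans _ h).
by rewrite invf_le1 ?ltr0n ?ler1n.
Qed.

Lemma gam_le t j : (1 <= j < t)%N -> gammat lam k t <= lam * k t j.
Proof. by move=> hj; apply: bigmin_le_term; rewrite mem_index_iota. Qed.

Lemma gam'_ge1 t : 1 <= gammat' lam k t.
Proof. exact: bigmax_ge_init. Qed.

Lemma gam'_ge t j : (1 <= j < t)%N -> lam * k t j <= gammat' lam k t.
Proof. by move=> hj; apply: bigmax_ge_term; rewrite mem_index_iota. Qed.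

Definition cup : R := 2 - alpha R + alpha R * ln (alpha R / 2).
Definition clo : R := alpha R * ln (1 + expR 2) + alpha R.

Definition Zup t := Ltrain lam k t (f t) (f t.-1) (D t) D / gammat lam k t
  + (1 - (gammat lam k t)^-1) * inf_Lcon dim (D t).
Definition Zlo t := Ltrain lam k t (f t) (f t.-1) (D t) D / gammat' lam k t.

Lemma Ltest_split t : (1 <= t)%N ->
  Ltest t (f t) D = \sum_(1 <= j < t) Lcon (f t) (D j) + Lcon (f t) (D t).
Proof. by move=> ht; rewrite /Ltest big_nat_recr. Qed.

Lemma Ltest_prev t : (2 <= t)%N ->
  Ltest t.-1 (f t.-1) D = \sum_(1 <= j < t) Lcon (f t.-1) (D j).
Proof. by move=> ht; rewrite /Ltest prednK // (ltnW ht). Qed.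

Lemma step_up t : (2 <= t <= T)%N ->
  Ltest t (f t) D <= alpha R * Ltest t.-1 (f t.-1) D + Zup t + cup * (t.-1)%:R.
Proof.
move=> ht; have /andP[t2 tT] := ht.
have t1 : (1 <= t)%N by apply: ltnW.
have ft : is_encoder (f t) by apply: hf; rewrite t1.
have ftm : is_encoder (f t.-1).
  by apply: hf; rewrite -ltnS prednK // t2 /= (leq_trans (leq_pred t)).
have g0 := gam_pos t ht; have g1 := gam_le1 t ht.
rewrite Ltest_split // Ltest_prev // /Zup /Ltrain.
apply: (comb_up _ _ (\sum_(1 <= j < t) Ldis (f t) (f t.-1) (D j))).
- apply: (@le_trans _ _ (\sum_(1 <= j < t) (alpha R * Lcon (f t.-1) (D j) + Ldis (f t) (f t.-1) (D j) + cup))).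
    by apply: ler_sum => j _; exact: key_up.
  rewrite big_split /= big_split /= -mulr_sumr sumr_const_nat subn1 -mulr_natr.
  by rewrite mul1r mulr_natr.
- rewrite /Ldis_prev mulr_sumr mulr_suml; apply: ler_sum_nat => j hj.
  have gl := gam_le _ _ hj.
  have L0 := Ldis_ge0 _ _ (D j) ft ftm.
  rewrite (_ : lam * (k t j * _) / _ = Ldis (f t) (f t.-1) (D j) * (lam * k t j / gammat lam k t)); last first.
    by ring.
  by apply: ler_peMr => //; rewrite ler_pdivlMr // mul1r.
- have hi := Lcon_ge_inf _ (D t) ft.
  have u1 : 1 <= (gammat lam k t)^-1 by rewrite invf_ge1.
  have hp : 0 <= ((gammat lam k t)^-1 - 1) * (Lcon (f t) (D t) - inf_Lcon dim (D t)).
    by apply: mulr_ge0; rewrite subr_ge0.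
  move: hp u1; set L := Lcon (f t) (D t); set I := inf_Lcon dim (D t).
  set u := (gammat lam k t)^-1; move=> hp u1.
  rewrite /u in hp u1 *; lra.
Qed.

Lemma step_lo t : (2 <= t <= T)%N ->
  alpha R * Ltest t.-1 (f t.-1) D + Zlo t - clo * (t.-1)%:R <= Ltest t (f t) D.
Proof.
move=> ht; have /andP[t2 tT] := ht.
have t1 : (1 <= t)%N by apply: ltnW.
have ft : is_encoder (f t) by apply: hf; rewrite t1.
have ftm : is_encoder (f t.-1).
  by apply: hf; rewrite -ltnS prednK // t2 /= (leq_trans (leq_pred t)).
have g1 := gam'_ge1 t.
have g0 : 0 < gammat' lam k t by apply: lt_le_trans g1.
rewrite (Ltest_prev t t2) (Ltest_split t t1) /Zlo /Ltrain.
apply: (comb_lo _ _ (\sum_(1 <= j < t) Ldis (f t) (f t.-1) (D j))).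
- apply: (@le_trans _ _ (\sum_(1 <= j < t) (alpha R * Lcon (f t.-1) (D j) + Ldis (f t) (f t.-1) (D j) - clo))); last first.
    by apply: ler_sum => j _; exact: key_lo.
  rewrite sumrB big_split /= -mulr_sumr sumr_const_nat subn1.
  by rewrite mulr_natr.
- rewrite /Ldis_prev mulr_sumr mulr_suml; apply: ler_sum_nat => j hj.
  have gl := gam'_ge _ _ hj.
  have L0 := Ldis_ge0 _ _ (D j) ft ftm.
  rewrite (_ : lam * (k t j * _) / _ = Ldis (f t) (f t.-1) (D j) * (lam * k t j / gammat' lam k t)); last first.
    by ring.
  by apply: ler_piMr => //; rewrite ler_pdivrMr // mul1r.
- have L0 := Lcon_ge0 _ (D t) ft.
  by rewrite ler_pdivrMr //; apply: ler_peMr.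
Qed.

End Main.

Lemma alpha_neq1 {R : realType} : alpha R != 1.
Proof.
apply/negP => /eqP h.
have hp := @pos1e R 2.
have := congr1 (fun z => z * (1 + expR (2 : R))) h.
rewrite /= /alpha mulfVK ?gt_eqF // mul1r => h2.
have := @expR_ge1Dx R 2; lra.
Qed.

Lemma aux_re {R : realType} (p X Y c : R) : p + (X + Y) + c = p + X + (c + Y).
Proof. ring. Qed.

Theorem theorem1 (R : realType) (d : measure_display) (X : measurableType d)
  (dim : nat) (hdim : (0 < dim)%N)
  (T : nat) (hT : (2 <= T)%N)
  (D : nat -> taskdist X R)
  (f : nat -> X -> 'rV[R]_dim)
  (hf : forall t, (1 <= t <= T)%N -> is_encoder (f t))
  (lam : R) (hlam : 0 < lam)
  (k : nat -> nat -> R)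
  (hkpos : forall t j, (2 <= t <= T)%N -> (1 <= j < t)%N -> 0 < k t j)
  (hksum : forall t, (2 <= t <= T)%N -> \sum_(1 <= j < t) k t j = 1) :
  let a := alpha R in
  let eta :=
    (2 - a + a * ln (a / 2)) * geomfac R T
    + \sum_(2 <= t < T.+1)
        a ^+ (T - t) * (1 - (gammat lam k t)^-1) * inf_Lcon dim (D t) in
  let eta' := - (a * ln (1 + expR 2) + a) * geomfac R T in
  Ltest T (f T) D <=
    a ^+ (T - 1) * Ltrain1 (f 1%N) (D 1%N)
    + \sum_(2 <= t < T.+1)
        a ^+ (T - t) / gammat lam k t * Ltrain lam k t (f t) (f t.-1) (D t) D
    + eta
  /\
  Ltest T (f T) D >=
    a ^+ (T - 1) * Ltrain1 (f 1%N) (D 1%N)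
    + \sum_(2 <= t < T.+1)
        a ^+ (T - t) / gammat' lam k t * Ltrain lam k t (f t) (f t.-1) (D t) D
    + eta'.
Proof.
move=> a eta eta'; rewrite /eta /eta' /a.
have a0 : 0 < alpha R := alpha_gt0.
have a1 : alpha R != 1 := alpha_neq1.
have hT1 : (1 <= T <= T)%N by rewrite leqnn andbT (ltnW hT).
have L1 : Ltest 1 (f 1%N) D = Ltrain1 (f 1%N) (D 1%N) by rewrite /Ltest big_nat1.
have gfE : geomfac R T = gf (alpha R) T by [].
split.
- have SU := @unroll R (alpha R) cup (fun t => Ltest t (f t) D) (Zup D f lam k) T a0 a1
    (step_up D f lam k T hf hlam hkpos) T hT1.
  rewrite /= L1 in SU.
  apply: (le_trans SU).
  have -> : \sum_(2 <= t < T.+1) alpha R ^+ (T - t) * Zup D f lam k t =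
     \sum_(2 <= t < T.+1) alpha R ^+ (T - t) / gammat lam k t * Ltrain lam k t (f t) (f t.-1) (D t) D
     + \sum_(2 <= t < T.+1) alpha R ^+ (T - t) * (1 - (gammat lam k t)^-1) * inf_Lcon dim (D t).
    rewrite -big_split /=; apply: eq_bigr => t _; rewrite /Zup; ring.
  by rewrite aux_re gfE.
- have SL := @unroll_lo R (alpha R) clo (fun t => Ltest t (f t) D) (Zlo D f lam k) T a0 a1
    (step_lo D f lam k T hf) T hT1.
  rewrite /= L1 in SL.
  apply: le_trans SL.
  have -> : \sum_(2 <= t < T.+1) alpha R ^+ (T - t) * Zlo D f lam k t =
     \sum_(2 <= t < T.+1) alpha R ^+ (T - t) / gammat' lam k t * Ltrain lam k t (f t) (f t.-1) (D t) D.
    apply: eq_bigr => t _; rewrite /Zlo; ring.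
  by rewrite gfE mulNr /clo.
Qed.
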